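(* Let $p,q,p',q'\in(0,1/2)$, suppose $K_{pq}$ and $K_{p'q'}$ are twofold Cantor sets, and let $f:K_{pq}\to K_{p'q'}$ be a homeomorphism with $f(S_i(x))=S_i'(f(x))$ for all $x\in K_{pq}$ and $i\in\{1,2,3,4\}$. Then $f$ extends to a homeomorphism $\tilde f:\mathbb C\to\mathbb C$. Moreover, if some such extension $\tilde f$ satisfies $\tilde f\circ S_i(z)=S_i'\circ\tilde f(z)$ for all $z\in\mathbb C$ and all $i\in\{1,2,3,4\}$, then $(p,q)=(p',q')$.
   Context: For $p,q\in(0,1/2)$ let $S_1(z)=pz$, $S_2(z)=qz$, $S_3(z)=pz+1-p$, $S_4(z)=qz+1-q$ (maps of $\mathbb R$, also regarded as maps of $\mathbb C$ by the same formulas), let $K_{pq}\subset\mathbb R\subset\mathbb C$ be the attractor of $\{S_1,S_2,S_3,S_4\}$ (the unique nonempty compact $K$ with $K=\bigcup_{i=1}^4S_i(K)$), and let $A=S_3(K_{pq})\cup S_4(K_{pq})$. $K_{pq}$ is called a twofold Cantor set if $S_1^m(A)\cap S_2^n(A)=\varnothing$ for all $m,n\in\mathbb N$. The maps $S_i'$ are defined in the same way with $p',q'$ in place of $p,q$. *)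

(* Defs.v *)
(* R : realType; the complex plane C is modelled as R * R
   (product topology = Euclidean topology), z = (Re z, Im z). *)
From mathcomp Require Import all_boot all_order all_algebra.
From mathcomp Require Import all_classical all_reals all_analysis.
Set Implicit Arguments. Unset Strict Implicit. Unset Printing Implicit Defensive.
Import Order.TTheory GRing.Theory Num.Theory.
Import numFieldNormedType.Exports.
Local Open Scope classical_set_scope.
Local Open Scope ring_scope.

(* The four maps S_1..S_4 on the real line, indexed by i : 'I_4 (i = 0,1,2,3 <-> S_1..S_4). *)
Definition Smap {R : realType} (p q : R) (i : 'I_4) (x : R) : R :=
  match val i with
  | 0 => p * x
  | 1 => q * x
  | 2 => p * x + 1 - p
  | _ => q * x + 1 - q
  end.

Definition SmapC {R : realType} (p q : R) (i : 'I_4) (z : R * R) : R * R :=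
  match val i with
  | 0 => (p * z.1, p * z.2)
  | 1 => (q * z.1, q * z.2)
  | 2 => (p * z.1 + 1 - p, p * z.2)
  | _ => (q * z.1 + 1 - q, q * z.2)
  end.

Definition is_attractor {R : realType} (p q : R) (K : set R) : Prop :=
  K !=set0 /\ compact K /\ K = \bigcup_(i in [set: 'I_4]) (Smap p q i @` K).

Definition Aset {R : realType} (p q : R) (K : set R) : set R :=
  (Smap p q (inord 2) @` K) `|` (Smap p q (inord 3) @` K).

Definition twofold {R : realType} (p q : R) (K : set R) : Prop :=
  forall m n : nat, (0 < m)%N -> (0 < n)%N ->
    (iter m (Smap p q (inord 0)) @` Aset p q K)
      `&` (iter n (Smap p q (inord 1)) @` Aset p q K) = set0.

Definition homeo_on {T U : topologicalType} (A : set T) (B : set U) (f : T -> U) : Prop :=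
  exists g : U -> T,
    (forall x, A x -> B (f x)) /\ (forall y, B y -> A (g y)) /\
    (forall x, A x -> g (f x) = x) /\ (forall y, B y -> f (g y) = y) /\
    {within A, continuous f} /\ {within B, continuous g}.

(* Main.v *)
Require Import Defs.
From mathcomp Require Import all_boot all_order all_algebra.
From mathcomp Require Import all_classical all_reals all_analysis.
From mathcomp Require Import ring lra.
Import Order.TTheory GRing.Theory Num.Theory.
Import numFieldNormedType.Exports.
Local Open Scope classical_set_scope.
Local Open Scope ring_scope.

Lemma ext_lemma (R : realType) (K K' : set R) (f : R -> R) :
  compact K -> compact K' -> (forall x, K x -> K' (f x)) ->
  {within K, continuous f} ->
  exists g : R -> R, continuous g /\ forall x, K x -> g x = f x.
Proof.
move=> cK cK' fK cf.
have [M M0 HM] := ex_strict_bound_gt0 (compact_bounded cK').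
have clK : closed K by apply: compact_closed => //; exact: hausdorff_space.
have := @continuous_bounded_extension R R pseudometric_normal K clK f M M0 cf.
case.
  by move=> x Kx; apply/ltW; apply: (HM (f x)); exact: fK.
move=> g [fg cg _]; exists g; split => // x Kx.
by rewrite fg // inE.
Qed.
Lemma cont_shear (R : realType) (phi psi : R -> R) :
  continuous phi -> continuous psi ->
  continuous (fun z : R * R => (z.2 + phi z.1, - (z.1 - psi (z.2 + phi z.1)))).
Proof.
move=> cphi cpsi z.
have c1 : continuous (fun z : R * R => z.2 + phi z.1).
  move=> w; apply: cvgD; first exact: cvg_snd.
  apply: (continuous_comp (f := fst)); first exact: cvg_fst.
  exact: cphi.
apply: (@cvg_pair _ _ _ _ (nbhs (z.2 + phi z.1)) (nbhs (- (z.1 - psi (z.2 + phi z.1)))) _ _ _ (fun z : R * R => z.2 + phi z.1) (fun z : R * R => - (z.1 - psi (z.2 + phi z.1)))); first exact: c1.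
apply: cvgN; apply: cvgB; first exact: cvg_fst.
apply: (continuous_comp (f := fun z : R * R => z.2 + phi z.1)); first exact: c1.
exact: cpsi.
Qed.
Lemma fixp0 {R : realType} (p' x : R) : p' < 1 -> x = p' * x -> x = 0.
Proof.
move=> p1 E.
have : (1 - p') * x = 0 by rewrite mulrBl mul1r -E subrr.
move/eqP; rewrite mulf_eq0 => /orP[/eqP|/eqP] //; lra.
Qed.

Lemma key (R : realType) (p p' : R) (F G : R * R -> R * R) :
  0 < p < 1 -> 0 < p' < 1 -> continuous F -> (forall z, G (F z) = z) ->
  (forall z, F (p * z.1, p * z.2) = (p' * (F z).1, p' * (F z).2)) ->
  (forall z, F (p * z.1 + 1 - p, p * z.2) = (p' * (F z).1 + 1 - p', p' * (F z).2)) ->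
  p <= p'.
Proof.
move=> /andP[p0 p1] /andP[p'0 p'1] cF GF H1 H3.
rewrite leNgt; apply/negP => lt.
have pn0 : p != 0 by rewrite gt_eqF.
have p'n0 : p' != 0 by rewrite gt_eqF.
have F0 : F (0, 0) = (0, 0).
  have := H1 (0, 0); rewrite /= !mulr0 => E.
  have E1 := congr1 fst E; have E2 := congr1 snd E; rewrite /= in E1 E2.
  by rewrite [F _]surjective_pairing (@fixp0 _ _ _ p'1 E1) (@fixp0 _ _ _ p'1 E2).
have Hdiv z : F (z.1 / p, z.2 / p) = ((F z).1 / p', (F z).2 / p').
  have E := H1 (z.1 / p, z.2 / p).
  have e : (p * (z.1 / p, z.2 / p).1, p * (z.1 / p, z.2 / p).2) = z.
    by rewrite [RHS]surjective_pairing /=; congr pair; field; exact: pn0.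
  rewrite e in E.
  rewrite E /= [LHS]surjective_pairing; congr pair; field; exact: p'n0.
pose a := (1 - p) / p; pose a' := (1 - p') / p'.
have Htr z : F (z.1 + a, z.2) = ((F z).1 + a', (F z).2).
  have -> : (z.1 + a, z.2) = (((p * z.1 + 1 - p), p * z.2).1 / p, ((p * z.1 + 1 - p), p * z.2).2 / p).
    rewrite /a /=; congr pair; field; exact: pn0.
  rewrite Hdiv H3 /a' /=; congr pair; field; exact: p'n0.
have HtrK k z : F (z.1 + p ^+ k * a, z.2) = ((F z).1 + p' ^+ k * a', (F z).2).
  elim: k z => [|k IH] z; first by rewrite !expr0 !mul1r Htr.
  have -> : (z.1 + p ^+ k.+1 * a, z.2) = (p * (z.1 / p + p ^+ k * a), p * (z.2 / p)).
    rewrite exprS; congr pair; field; exact: pn0.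
  rewrite (H1 (z.1 / p + p ^+ k * a, z.2 / p)).
  rewrite (IH (z.1 / p, z.2 / p)) Hdiv /= exprS; congr pair; field; exact: p'n0.
have Hn k n : F (n%:R * (p ^+ k * a), 0) = (n%:R * (p' ^+ k * a'), 0).
  elim: n => [|n IH]; first by rewrite !mul0r F0.
  have -> : (n.+1%:R * (p ^+ k * a), 0) = ((n%:R * (p ^+ k * a), 0 : R).1 + p ^+ k * a, (n%:R * (p ^+ k * a), 0 : R).2).
    by rewrite /= mulrSr mulrDl mul1r.
  by rewrite HtrK IH /= mulrSr mulrDl mul1r.
have a0 : 0 < a by rewrite /a divr_gt0 // subr_gt0.
have a'0 : 0 < a' by rewrite /a' divr_gt0 // subr_gt0.
pose t k := p ^+ k * a.
pose n k := Num.truncn (t k)^-1.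
have t0 k : 0 < t k by rewrite /t mulr_gt0 // exprn_gt0.
have tn k : (n k)%:R * t k <= 1 /\ 1 < (n k)%:R * t k + t k.
  have ti0 : 0 <= (t k)^-1 by rewrite invr_ge0 ltW.
  have /andP[h1 h2] := Num.Theory.truncn_itv ti0.
  have ti : (t k)^-1 * t k = 1 by rewrite mulVf // gt_eqF.
  have := t0 k; rewrite -/(n k) in h1 h2 *; rewrite -natr1 in h2.
  move=> tk; split; nra.
have tc : t @ \oo --> 0.
  have := cvgM (cvg_expr (z := p) _) (cvg_cst a); rewrite mul0r; apply.
  by rewrite ger0_norm ?ltW.
have uc : (fun k => ((n k)%:R * t k, 0 : R)) @ \oo --> ((1 : R), (0 : R)).
  apply: (@cvg_pair _ _ _ _ (nbhs (1:R)) (nbhs (0:R)) _ _ _ (fun k => (n k)%:R * t k) (fun _ => 0)); last exact: cvg_cst.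
  apply: (@squeeze_cvgr _ _ _ _ (fun k => 1 - t k) (fun k => 1)).
  - by apply: nearW => k; have [h1 h2] := tn k; apply/andP; split => //; lra.
  - by rewrite -[X in _ --> X]subr0; apply: cvgB => //; exact: cvg_cst.
  - exact: cvg_cst.
have c1 := cvg_comp _ _ uc (cF (1, 0)).
have c2 : (F \o (fun k => ((n k)%:R * t k, 0 : R))) @ \oo --> ((0 : R), (0 : R)).
  rewrite /comp /t; under eq_fun do rewrite Hn.
  apply: (@cvg_pair _ _ _ _ (nbhs (0:R)) (nbhs (0:R)) _ _ _ (fun k => (n k)%:R * (p' ^+ k * a')) (fun _ => 0)); last exact: cvg_cst.
  apply: (@squeeze_cvgr _ _ _ _ (fun k => 0) (fun k => (a' / a) * (p' / p) ^+ k)).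
  - apply: nearW => k; apply/andP; split.
      by rewrite mulr_ge0 // mulr_ge0 // ?exprn_ge0 // ltW.
    have [h1 _] := tn k.
    have e : (a' / a) * (p' / p) ^+ k = (t k)^-1 * (p' ^+ k * a').
      by rewrite /t expr_div_n; field; rewrite ?expf_neq0 ?gt_eqF.
    rewrite e; apply: ler_wpM2r; first by rewrite mulr_ge0 // ?exprn_ge0 // ltW.
    by rewrite -(ler_pM2r (t0 k)) mulVf ?gt_eqF.

  - exact: cvg_cst.
  - rewrite -[X in _ --> X](mulr0 (a' / a)); apply: cvgM; first exact: cvg_cst.
    apply: cvg_expr; rewrite ger0_norm ?divr_ge0 ?ltW // ltr_pdivrMr // mul1r //.
have E : F (1, 0) = (0, 0) by apply: (cvg_unique _ c1 c2).
have := GF (1, 0); rewrite E -F0 GF => /(congr1 fst) /= /eqP.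
by rewrite eq_sym oner_eq0.
Qed.

Lemma cont_shear_inv (R : realType) (phi psi : R -> R) :
  continuous phi -> continuous psi ->
  continuous (fun w : R * R => (psi w.1 - w.2, w.1 - phi (psi w.1 - w.2))).
Proof.
move=> cphi cpsi z.
have c1 : continuous (fun w : R * R => psi w.1 - w.2).
  move=> w; apply: cvgB; last exact: cvg_snd.
  apply: (continuous_comp (f := fst)); first exact: cvg_fst.
  exact: cpsi.
apply: (@cvg_pair _ _ _ _ (nbhs (psi z.1 - z.2)) (nbhs (z.1 - phi (psi z.1 - z.2))) _ _ _ (fun w : R * R => psi w.1 - w.2) (fun w : R * R => w.1 - phi (psi w.1 - w.2))); first exact: c1.
apply: cvgB; first exact: cvg_fst.
apply: (continuous_comp (f := fun w : R * R => psi w.1 - w.2)); first exact: c1.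
exact: cphi.
Qed.

Theorem theorem12 (R : realType) (p q p' q' : R) (K K' : set R) (f : R -> R) :
  0 < p < 2^-1 -> 0 < q < 2^-1 -> 0 < p' < 2^-1 -> 0 < q' < 2^-1 ->
  is_attractor p q K -> is_attractor p' q' K' ->
  twofold p q K -> twofold p' q' K' ->
  homeo_on K K' f ->
  (forall x i, K x -> f (Smap p q i x) = Smap p' q' i (f x)) ->
  (exists F : R * R -> R * R,
      homeo_on [set: R * R] [set: R * R] F /\
      forall x, K x -> F (x, 0) = (f x, 0)) /\
  (forall F : R * R -> R * R,
      homeo_on [set: R * R] [set: R * R] F ->
      (forall x, K x -> F (x, 0) = (f x, 0)) ->
      (forall z i, F (SmapC p q i z) = SmapC p' q' i (F z)) ->
      p = p' /\ q = q').
Proof.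
move=> hp hq hp' hq' [_ [cK _]] [_ [cK' _]] _ _ [g [fK [gK [gf [fg [cf cg]]]]]] _.
split.
  have [phi [cphi ephi]] := @ext_lemma _ _ _ _ cK cK' fK cf.
  have [psi [cpsi epsi]] := @ext_lemma _ _ _ _ cK' cK gK cg.
  exists (fun z : R * R => (z.2 + phi z.1, - (z.1 - psi (z.2 + phi z.1)))); split.
    exists (fun w : R * R => (psi w.1 - w.2, w.1 - phi (psi w.1 - w.2))).
    split => //; split => //; split.
      move=> z _ /=.
      have e : psi (z.2 + phi z.1) - - (z.1 - psi (z.2 + phi z.1)) = z.1.
        by rewrite opprK addrC subrK.
      by rewrite e addrK; case: z {e}.
    split.
      move=> w _ /=; rewrite subrK.
      by rewrite addrAC subrr add0r opprK; case: w.
    split; apply: continuous_subspaceT.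
      exact: cont_shear.
    exact: cont_shear_inv.
  move=> x Kx /=; rewrite add0r ephi // epsi; last exact: fK.
  by rewrite gf // subrr oppr0.
have two1 : (2^-1 : R) < 1 by rewrite invf_lt1 // ltr1n.
have key2 (r r' s s' : R) (F : R * R -> R * R) : 0 < r < 1 -> 0 < r' < 1 ->
  0 < s < 1 -> 0 < s' < 1 ->
  homeo_on [set: R * R] [set: R * R] F ->
  (forall z i, F (SmapC r s i z) = SmapC r' s' i (F z)) -> r <= r' /\ s <= s'.
  move=> hr hr' hs hs' [G [_ [_ [GF [FG [cF cG]]]]]] Hc.
  have {}cF : continuous F := proj2 (continuous_subspace_setT F) cF.
  split.
    apply: (@key _ _ _ F G hr hr' cF (fun z => GF z I)).
      by move=> z; have := Hc z (@Ordinal 4 0 isT).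
    by move=> z; have := Hc z (@Ordinal 4 2 isT).
  apply: (@key _ _ _ F G hs hs' cF (fun z => GF z I)).
    by move=> z; have := Hc z (@Ordinal 4 1 isT).
  by move=> z; have := Hc z (@Ordinal 4 3 isT).
move=> F hF _ Hc.
have lt1 (x : R) : 0 < x < 2^-1 -> 0 < x < 1.
  by case/andP => h1 h2; rewrite h1 /= (lt_trans h2).
have [le1 le2] := key2 _ _ _ _ F (lt1 _ hp) (lt1 _ hp') (lt1 _ hq) (lt1 _ hq') hF Hc.
case: hF => [G [_ [_ [GF [FG [cF cG]]]]]].
have hG : homeo_on [set: R * R] [set: R * R] G.
  exists F; split; first by []. split; first by [].
  split; first by move=> z _; apply: FG.
  split; first by move=> z _; apply: GF.
  by split.
have HcG z i : G (SmapC p' q' i z) = SmapC p q i (G z).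
  by rewrite -{1}(FG z I) -Hc GF.
have [le3 le4] := key2 _ _ _ _ G (lt1 _ hp') (lt1 _ hp) (lt1 _ hq') (lt1 _ hq) hG HcG.
by split; apply/eqP; rewrite eq_le ?le1 ?le2 ?le3 ?le4.
Qed.
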